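(* Let $A$ be a simple finite-dimensional associative superalgebra over an algebraically closed field $\mathbb{K}$ of characteristic zero. Then $A$ admits an even-symmetric structure if and only if $A$ is isomorphic to $M_{r,s}(\mathbb{K})$ for some integers $r\ge 1$, $s\ge 0$. In particular, the field $\mathbb{K}$ (with $\mathbb{K}_{\bar 1}=\{0\}$) is, up to isomorphism, the unique simple associative supercommutative superalgebra admitting an even-symmetric structure.
   Context: A superalgebra is a $\mathbb{Z}_2$-graded algebra $A=A_{\bar 0}\oplus A_{\bar 1}$ with $A_\alpha A_\beta\subseteq A_{\alpha+\beta}$; $|x|$ denotes the degree of a homogeneous element. An associative superalgebra is simple if its product is not identically zero and its only graded two-sided ideals are $\{0\}$ and $A$. It is supercommutative if $xy=(-1)^{|x||y|}yx$ for homogeneous $x,y$. An even-symmetric structure on $A$ is a bilinear form $B$ with $B(A_{\bar 0},A_{\bar 1})=B(A_{\bar 1},A_{\bar 0})=\{0\}$ which is supersymmetric ($B(x,y)=(-1)^{|x||y|}B(y,x)$ for homogeneous $x,y$), associative ($B(xy,z)=B(x,yz)$) and non-degenerate. For $r\ge1$, $s\ge0$, $n=r+s$, $M_{r,s}(\mathbb{K})$ is the matrix algebra $M_n(\mathbb{K})$ with even part the block-diagonal matrices $\begin{pmatrix}a&0\\0&b\end{pmatrix}$, $a\in M_r(\mathbb{K})$, $b\in M_s(\mathbb{K})$, and odd part the block-off-diagonal matrices $\begin{pmatrix}0&c\\d&0\end{pmatrix}$, $c\in M_{r\times s}(\mathbb{K})$, $d\in M_{s\times r}(\mathbb{K})$.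 *)

(* Defs.v *)
From HB Require Import structures.
From mathcomp Require Import all_boot all_order all_algebra.
Set Implicit Arguments. Unset Strict Implicit. Unset Printing Implicit Defensive.
Import GRing.Theory.
Local Open Scope ring_scope.

(* A (not necessarily unital) finite-dimensional superalgebra over K is
   modelled as a finite-dimensional K-vector space V (vectType), a product
   mul : V -> V -> V, and two subspaces V0 (even part), V1 (odd part). *)

Section Super.
Variables (K : fieldType) (V : vectType K).

Definition sdeg (V0 V1 : {vspace V}) (i : bool) : {vspace V} :=
  if i then V1 else V0.

Definition is_superalgebra (mul : V -> V -> V) (V0 V1 : {vspace V}) : Prop :=
  [/\ (forall a x y z, mul (a *: x + y) z = a *: mul x z + mul y z),
      (forall a x y z, mul z (a *: x + y) = a *: mul z x + mul z y),
      (V0 + V1)%VS = fullv /\ directv (V0 + V1) &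
      (forall (i j : bool) x y, x \in sdeg V0 V1 i -> y \in sdeg V0 V1 j ->
          mul x y \in sdeg V0 V1 (i (+) j))].

Definition graded_ideal (mul : V -> V -> V) (V0 V1 I : {vspace V}) : Prop :=
  I = (I :&: V0 + I :&: V1)%VS /\
  (forall a x, x \in I -> mul a x \in I /\ mul x a \in I).

Definition simple_superalgebra (mul : V -> V -> V) (V0 V1 : {vspace V}) : Prop :=
  (exists x y, mul x y != 0) /\
  (forall I, graded_ideal mul V0 V1 I -> I = 0%VS \/ I = fullv).

Definition supercommutative (mul : V -> V -> V) (V0 V1 : {vspace V}) : Prop :=
  forall (i j : bool) x y, x \in sdeg V0 V1 i -> y \in sdeg V0 V1 j ->
    mul x y = (-1) ^+ (i && j) *: mul y x.

Definition even_symmetric (mul : V -> V -> V) (V0 V1 : {vspace V})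
  (B : V -> V -> K) : Prop :=
  [/\ (forall a x y z, B (a *: x + y) z = a * B x z + B y z),
      (forall a x y z, B z (a *: x + y) = a * B z x + B z y),
      (forall x y, x \in V0 -> y \in V1 -> B x y = 0 /\ B y x = 0) /\
      (forall (i j : bool) x y, x \in sdeg V0 V1 i -> y \in sdeg V0 V1 j ->
          B x y = (-1) ^+ (i && j) * B y x),
      (forall x y z, B (mul x y) z = B x (mul y z)) &
      (forall x, (forall y, B x y = 0) -> x = 0)].

Definition has_even_symmetric (mul : V -> V -> V) (V0 V1 : {vspace V}) : Prop :=
  exists B, even_symmetric mul V0 V1 B.

End Super.

(* The superalgebra M_{r,s}(K): even part = block-diagonal, odd part =
   block-off-diagonal matrices (w.r.t. the split r + s). *)
Definition Mrs_even (K : fieldType) (r s : nat) (A : 'M[K]_(r + s)) : Prop :=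
  forall i j : 'I_(r + s), ((i < r)%N != (j < r)%N) -> A i j = 0.
Definition Mrs_odd (K : fieldType) (r s : nat) (A : 'M[K]_(r + s)) : Prop :=
  forall i j : 'I_(r + s), ((i < r)%N == (j < r)%N) -> A i j = 0.

Definition iso_Mrs (K : fieldType) (V : vectType K) (mul : V -> V -> V)
  (V0 V1 : {vspace V}) (r s : nat) : Prop :=
  exists f : V -> 'M[K]_(r + s),
    [/\ (forall a x y, f (a *: x + y) = a *: f x + f y),
        bijective f,
        (forall x y, f (mul x y) = f x *m f y),
        (forall x, x \in V0 <-> Mrs_even (f x)) &
        (forall x, x \in V1 <-> Mrs_odd (f x))].

Definition iso_field (K : fieldType) (V : vectType K) (mul : V -> V -> V)
  (V0 V1 : {vspace V}) : Prop :=
  exists f : V -> K,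
    [/\ (forall a x y, f (a *: x + y) = a * f x + f y),
        bijective f,
        (forall x y, f (mul x y) = f x * f y),
        (forall x, x \in V0) &
        (forall x, x \in V1 <-> f x = 0)].

(* Main.v *)
Require Import Defs.
From HB Require Import structures.
From mathcomp Require Import all_boot all_order all_algebra.
From Stdlib Require Import Classical.
Set Implicit Arguments. Unset Strict Implicit. Unset Printing Implicit Defensive.
Import GRing.Theory.
Local Open Scope ring_scope.

Section LinFun.
Variables (K : fieldType) (V : lmodType K) (W : lmodType K) (f : V -> W).
Hypothesis Hf : forall a x y, f (a *: x + y) = a *: f x + f y.

Lemma lf0 : f 0 = 0.
Proof.
have h := Hf 1 0 0; rewrite scaler0 addr0 scale1r in h.
by apply: (addIr (f 0)); rewrite add0r -h.
Qed.
Lemma lfD x y : f (x + y) = f x + f y.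
Proof. by have := Hf 1 x y; rewrite !scale1r. Qed.
Lemma lfZ a x : f (a *: x) = a *: f x.
Proof. by have := Hf a x 0; rewrite !addr0 lf0 addr0. Qed.
Lemma lfN x : f (- x) = - f x.
Proof. by rewrite -scaleN1r lfZ scaleN1r. Qed.
Lemma lfB x y : f (x - y) = f x - f y.
Proof. by rewrite lfD lfN. Qed.
Lemma lf_sum (I : Type) (r : seq I) (P : pred I) (F : I -> V) :
  f (\sum_(i <- r | P i) F i) = \sum_(i <- r | P i) f (F i).
Proof.
elim: r => [|i r IH]; first by rewrite !big_nil lf0.
rewrite !big_cons; case: (P i) => //; by rewrite lfD IH.
Qed.
End LinFun.

Lemma vspace_of_pred (K : fieldType) (V : vectType K) (P : V -> Prop) :
  P 0 -> (forall a x y, P x -> P y -> P (a *: x + y)) ->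
  exists S : {vspace V}, forall x, x \in S <-> P x.
Proof.
move=> P0 Pl.
suff H : forall n (S : {vspace V}), (\dim {:V} - \dim S < n)%N ->
   (forall x, x \in S -> P x) -> exists S : {vspace V}, forall x, x \in S <-> P x.
  have := H (\dim {:V}).+1 0%VS; apply; first by rewrite ltnS leq_subr.
  by move=> x; rewrite memv0 => /eqP ->.
move=> n; elim: n => [|n IH] S Sn SP; first by [].
case: (classic (forall x, P x -> x \in S)) => [HS|HS].
  by exists S => x; split; [exact: SP | exact: HS].
have [x Hx] := not_all_ex_not _ _ HS.
have [Px xS] := imply_to_and _ _ Hx.
have xS' : x \notin S by apply/negP.
apply: (IH (S + <[x]>)%VS).
  have lt1 : (\dim S < \dim (S + <[x]>)%VS)%N.
    rewrite ltnNge; apply/negP => hle.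
    have : S == (S + <[x]>)%VS by rewrite eqEdim addvSl hle.
    move/eqP => hS; move: xS'; rewrite hS.
    by rewrite (subvP (addvSr S <[x]>)) // memv_line.
  have le2 : (\dim (S + <[x]>)%VS <= \dim {:V})%N by apply: dimvS; apply: subvf.
  rewrite ltnS in Sn; apply: leq_trans Sn.
  rewrite ltn_sub2l //; apply: leq_trans le2; done.
move=> y /memv_addP [u Su [v /vlineP [k ->] ->]].
rewrite addrC; apply: Pl => //; exact: SP.
Qed.

Section Burnside.
Variables (K : closedFieldType) (W : vectType K) (m : nat) (g : W -> 'M[K]_m).
Hypothesis gL : forall a x y, g (a *: x + y) = a *: g x + g y.
Hypothesis gM : forall x y, exists z, g x *m g y = g z.
Hypothesis gT : forall u : 'rV_m, u != 0 -> forall v, exists x, u *m g x = v.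

Let n := \dim {:W}.
Let b := vbasis (@fullv K W).

Lemma g_expand x : g x = \sum_(i < n) coord b i x *: g b`_i.
Proof.
rewrite {1}(coord_vbasis (memvf x)) (lf_sum gL); apply: eq_bigr => i _.
by rewrite (lfZ gL).
Qed.

Lemma col_onto (a : 'cV_m) : a != 0 -> forall c : 'cV_m, exists x, g x *m a = c.
Proof.
move=> anz c.
pose H : 'M_(n, m) := \matrix_(i, j) (g b`_i *m a) j 0.
have Hfull : row_full H.
  apply/negPn/negP => nf.
  have kz : kermx H^T != 0.
    rewrite -mxrank_eq0 mxrank_ker mxrank_tr subn_eq0 -ltnNge.
    by rewrite ltn_neqAle rank_leq_col andbT; move: nf; rewrite /row_full.
  have [v vk vnz] := rowV0Pn kz.
  have vH : v *m H^T = 0 by apply/sub_kermxP.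
  have vb : forall j : 'I_n, v *m g b`_j *m a = 0.
    move=> j; apply/matrixP => p q; rewrite !ord1 -mulmxA [RHS]mxE.
    transitivity ((v *m H^T) 0 j); last by rewrite vH mxE.
    rewrite !mxE; apply: eq_bigr => l _; rewrite !mxE.
    by [].
  have vx : forall x, v *m g x *m a = 0.
    move=> x; rewrite g_expand mulmx_sumr mulmx_suml big1 // => i _.
    by rewrite -scalemxAr -scalemxAl vb scaler0.
  have da : forall d : 'rV_m, d *m a = 0.
    by move=> d; have [x <-] := gT vnz d; apply: vx.
  move/negP: anz; apply; apply/eqP/matrixP => i k.
  have := da (delta_mx 0 i); rewrite -rowE => /(congr1 (fun M : 'rV_1 => M 0 k)).
  by rewrite !mxE.
have cH : (c^T <= H)%MS by rewrite submx_full.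
pose w := c^T *m pinvmx H.
have wH : w *m H = c^T by rewrite mulmxKpV.
exists (\sum_(j < n) w 0 j *: b`_j).
rewrite (lf_sum gL) mulmx_suml.
apply/matrixP => i k; rewrite ord1 summxE.
have := congr1 (fun M : 'rV_m => M 0 i) wH; rewrite !mxE => <-.
apply: eq_bigr => j _; rewrite (lfZ gL) -scalemxAl !mxE.
by [].
Qed.
Definition Im X := exists x, g x = X.
Lemma g0 : g 0 = 0. Proof. exact: lf0 gL. Qed.
Lemma Im0 : Im 0. Proof. by exists 0; rewrite g0. Qed.
Lemma ImL a X Y : Im X -> Im Y -> Im (a *: X + Y).
Proof. by move=> [x <-] [y <-]; exists (a *: x + y); rewrite gL. Qed.
Lemma ImD X Y : Im X -> Im Y -> Im (X + Y).
Proof. by move=> hX hY; have := ImL 1 hX hY; rewrite scale1r. Qed.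
Lemma ImZ a X : Im X -> Im (a *: X).
Proof. by move=> hX; have := ImL a hX Im0; rewrite addr0. Qed.
Lemma ImM X Y : Im X -> Im Y -> Im (X *m Y).
Proof. by move=> [x <-] [y <-]; have [z hz] := gM x y; exists z. Qed.

Lemma rank_reduce x : (1 < \rank (g x))%N ->
  exists y, g y != 0 /\ (\rank (g y) < \rank (g x))%N.
Proof.
set T := g x => r2.
have Tnz : T != 0 by rewrite -mxrank_eq0 -lt0n; apply: ltnW.
have [i1 hi1] : exists i, row i T != 0.
  apply: NNPP => h; move/negP: Tnz; apply; apply/eqP/row_matrixP => i.
  by rewrite row0; apply/eqP; apply: NNPP => h'; apply: h; exists i; apply/negP.
set w1 := row i1 T.
have [i2 hi2] : exists i, ~~ (row i T <= w1)%MS.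
  apply: NNPP => h.
  have : (T <= w1)%MS.
    apply/row_subP => i; apply: NNPP => h'; apply: h; exists i; exact/negP.
  move/mxrankS; rewrite rank_rV hi1 => h1.
  by move: r2; rewrite ltnNge h1.
set w2 := row i2 T.
have [s hs] := gT hi1 (delta_mx 0 i2).
have w1sT : w1 *m g s *m T = w2 by rewrite hs -rowE.
set Bw := row_base T.
have TB : (T <= Bw)%MS by rewrite eq_row_base.
have BT : (Bw <= T)%MS by rewrite eq_row_base.
have Csub : (Bw *m (g s *m T) <= Bw)%MS.
  by apply: submx_trans TB; rewrite mulmxA submxMl.
set C := Bw *m (g s *m T) *m pinvmx Bw.
have CB : C *m Bw = Bw *m (g s *m T) by rewrite mulmxKpV.
have [lam hlam] : exists lam, root (char_poly C) lam.
  apply/closed_rootP; rewrite size_char_poly eqSS -lt0n.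
  by apply: ltnW.
move: hlam; rewrite -eigenvalue_root_char => /eigenvalueP [w hw wnz].
set M' := g s *m T - lam%:M.
have ImN : Im (T *m M').
  rewrite /M' mulmxBr mul_mx_scalar.
  have hT : Im T by exists x.
  have := ImL (- lam) hT (ImM (ImM hT (ex_intro _ s erefl)) hT).
  by rewrite scaleNr mulmxA addrC.
have [y hy] := ImN.
exists y; rewrite hy; split.
  apply/negP => /eqP N0.
  have : row i1 (T *m M') = w2 - lam *: w1.
    by rewrite row_mul /M' mulmxBr mul_mx_scalar mulmxA w1sT.
  rewrite N0 row0 => /eqP; rewrite eq_sym subr_eq0 => /eqP e.
  by move/negP: hi2; apply; rewrite -/w2 e scalemx_sub.
apply: (leq_ltn_trans (mxrankS (submxMr M' TB))).
have -> : Bw *m M' = (C - lam%:M) *m Bw.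
  by rewrite /M' mulmxBr mulmxBl CB mul_mx_scalar mul_scalar_mx.
apply: (leq_ltn_trans (mxrankM_maxl _ _)).
rewrite ltn_neqAle rank_leq_row andbT.
apply/negP => /eqP hfree.
have : w *m (C - lam%:M) == 0 by rewrite mulmxBr hw mul_mx_scalar subrr.
rewrite mulmx_free_eq0; last by rewrite /row_free hfree.
by move/negP: wnz.
Qed.
Lemma rank1_ex : (0 < m)%N -> exists x, \rank (g x) = 1%N.
Proof.
move=> m0; pose u : 'rV[K]_m := delta_mx 0 (Ordinal m0).
have unz : u != 0.
  apply/negP => /eqP/matrixP/(_ 0 (Ordinal m0)); rewrite !mxE !eqxx /=.
  by move/eqP; rewrite oner_eq0.
have [x hx] := gT unz u.
have gxnz : g x != 0 by apply/negP => /eqP hg; move: hx; rewrite hg mulmx0 => h; move: unz; rewrite -h eqxx.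
suff H : forall k x, g x != 0 -> (\rank (g x) <= k)%N -> exists y, \rank (g y) = 1%N.
  exact: (H _ x gxnz (leqnn _)).
elim=> [|k IH] y hy hk.
  by move: hk; rewrite leqn0 mxrank_eq0 (negbTE hy).
have [e1|ne1] := eqVneq (\rank (g y)) 1%N; first by exists y.
have r2 : (1 < \rank (g y))%N.
  by rewrite ltn_neqAle eq_sym ne1 /= lt0n mxrank_eq0.
have [z [hz hzr]] := rank_reduce r2.
apply: (IH z hz); rewrite -ltnS; exact: leq_trans hzr hk.
Qed.

Lemma burnside X : exists x, g x = X.
Proof.
case: (posnP m) => [m0|m0].
  exists 0; rewrite g0; apply/matrixP => i; move: (ltn_ord i); rewrite {2}m0.
  by [].
have [x0 hx0] := rank1_ex m0.
set T := g x0 in hx0.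
have Tnz : T != 0 by rewrite -mxrank_eq0 hx0.
have [i1 hi1] : exists i, row i T != 0.
  apply: NNPP => h; move/negP: Tnz; apply; apply/eqP/row_matrixP => i.
  by rewrite row0; apply/eqP; apply: NNPP => h'; apply: h; exists i; apply/negP.
set t := row i1 T.
have tT : (t <= T)%MS by rewrite row_sub.
have Tt : (T <= t)%MS.
  by rewrite -(mxrank_leqif_sup tT).2 rank_rV hi1 hx0.
set a := T *m pinvmx t.
have aT : a *m t = T by rewrite mulmxKpV.
have anz : a != 0 by apply/negP => /eqP a0; move: Tnz; rewrite -aT a0 mul0mx eqxx.
have hT : Im T by exists x0.
have cd : forall (c : 'cV_m) (d : 'rV_m), Im (c *m d).
  move=> c d; have [x1 h1] := col_onto anz c; have [x2 h2] := gT hi1 d.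
  have e : g x1 *m T *m g x2 = c *m d.
    by rewrite -aT (mulmxA (g x1)) h1 -(mulmxA c) h2.
  by rewrite -e; apply: ImM (ImM (ex_intro _ x1 erefl) hT) (ex_intro _ x2 erefl).
have -> : X = \sum_(i < m) delta_mx i 0 *m row i X.
  apply/matrixP => i j; rewrite summxE (bigD1 i) //= big1 ?addr0.
    by rewrite !mxE big_ord1 !mxE !eqxx mul1r.
  by move=> k hk; rewrite !mxE big_ord1 !mxE eq_sym (negbTE hk) mul0r.
by apply: (big_ind Im) => //; [exact: Im0 | exact: ImD].
Qed.
End Burnside.

Definition dsgn (K : fieldType) (r s : nat) : 'M[K]_(r + s) :=
  diag_mx (\row_(i < r + s) (if (i < r)%N then 1 else -1)).

Lemma involution_diag (K : fieldType) (m : nat) (P : 'M[K]_m) :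
  (2%:R : K) != 0 -> P *m P = 1%:M -> (0 < \rank (kermx (P - 1%:M)))%N ->
  exists r s (Q : 'M[K]_(r + s, m)) (Q' : 'M_(m, r + s)),
    [/\ (1 <= r)%N, Q *m Q' = 1%:M, Q' *m Q = 1%:M & Q *m P = dsgn K r s *m Q].
Proof.
move=> two PP r0.
set E1 := kermx (P - 1%:M); set E2 := kermx (P + 1%:M).
set R1 := row_base E1; set R2 := row_base E2.
have R1P : R1 *m P = R1.
  have : R1 *m (P - 1%:M) = 0 by apply/sub_kermxP; rewrite eq_row_base.
  by rewrite mulmxBr mulmx1 => /eqP; rewrite subr_eq0 => /eqP.
have R2P : R2 *m P = - R2.
  have : R2 *m (P + 1%:M) = 0 by apply/sub_kermxP; rewrite eq_row_base.
  by rewrite mulmxDr mulmx1 => /eqP; rewrite addr_eq0 => /eqP.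
have cap0 : (E1 :&: E2)%MS = 0.
  set X := (E1 :&: E2)%MS.
  have h1 : X *m (P - 1%:M) = 0 by apply/sub_kermxP; apply: capmxSl.
  have h2 : X *m (P + 1%:M) = 0 by apply/sub_kermxP; apply: capmxSr.
  have : X *m (P + 1%:M) - X *m (P - 1%:M) = 0 by rewrite h1 h2 subrr.
  rewrite -mulmxBr opprB [1%:M - P]addrC addrACA subrr add0r mulmxDr mulmx1 -mulr2n -scaler_nat.
  move/eqP; rewrite scaler_eq0 (negbTE two) /=.
  by move/eqP.
set h := (2%:R : K)^-1.
have full : (1%:M <= E1 + E2)%MS.
  have -> : (1%:M : 'M_m) = h *: (1%:M + P) + h *: (1%:M - P).
    by rewrite -scalerDr addrACA subrr addr0 -mulr2n -scaler_nat scalerA mulVf ?scale1r.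
  apply: addmx_sub_adds; apply/sub_kermxP; rewrite -scalemxAl.
    by rewrite mulmxBr mulmx1 mulmxDl PP mul1mx [P + 1%:M]addrC subrr scaler0.
  by rewrite mulmxDr mulmx1 mulmxBl PP mul1mx -(opprB P) subrr scaler0.
set r := \rank E1; set s := \rank E2.
set Q : 'M_(r + s, m) := col_mx R1 R2.
have QE : (Q :=: E1 + E2)%MS.
  apply: eqmx_trans (eqmx_sym (addsmxE _ _)) _.
  by apply: adds_eqmx; apply: eq_row_base.
have rs : (r + s)%N = m.
  rewrite -mxrank_disjoint_sum //; apply/eqP; rewrite eqn_leq rank_leq_col /=.
  by apply: (leq_trans _ (mxrankS full)); rewrite mxrank1.
have Qfull : row_full Q by rewrite -sub1mx QE.
have Qfree : row_free Q.
  by rewrite /row_free QE mxrank_disjoint_sum.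
exists r, s, Q, (pinvmx Q); split => //.
- apply/eqP; rewrite -subr_eq0 -(mulmx_free_eq0 _ Qfree) mulmxBl mul1mx.
  by rewrite mulmxKpV ?subrr.
- by rewrite -{1}(mul1mx (pinvmx Q)) mulmxKpV // sub1mx.
rewrite mul_col_mx R1P R2P /dsgn mul_diag_mx.
apply/matrixP => i j; rewrite !mxE.
by case: splitP => k hk; rewrite /= ?mul1r ?mulN1r ?mxE.
Qed.

Lemma rows_eq (K : fieldType) m n (A B : 'M[K]_(m, n)) :
  (forall u : 'rV_m, u *m A = u *m B) -> A = B.
Proof. by move=> h; apply/row_matrixP => i; rewrite !rowE h. Qed.

Lemma delta_mulE (K : fieldType) m (Z : 'M[K]_m) i j p q :
  ((delta_mx i j : 'M_m) *m Z) p q = (p == i)%:R * Z j q.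
Proof.
rewrite mxE (bigD1 j) //= big1 => [|k hk]; last by rewrite mxE (negbTE hk) andbF mul0r.
by rewrite mxE eqxx andbT addr0.
Qed.

Lemma mul_deltaE (K : fieldType) m (Z : 'M[K]_m) i j p q :
  (Z *m (delta_mx i j : 'M_m)) p q = Z p i * (q == j)%:R.
Proof.
rewrite mxE (bigD1 i) //= big1 => [|k hk]; last by rewrite mxE (negbTE hk) mulr0.
by rewrite mxE eqxx addr0.
Qed.

Lemma cent_scalar (K : fieldType) m (Z : 'M[K]_m) :
  (forall X, X *m Z = Z *m X) -> exists c, Z = c%:M.
Proof.
case: m Z => [|m] Z h.
  by exists 0; apply/matrixP => [[]].
have e : forall i j p q, (delta_mx i j *m Z) p q = (Z *m delta_mx i j) p q.
  by move=> i j p q; rewrite h.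
exists (Z 0 0); apply/matrixP => p q; rewrite !mxE.
have d1 : forall i j, Z i j = Z i i * (i == j)%:R.
  by move=> i j; have := e i i i j; rewrite delta_mulE mul_deltaE eqxx mul1r => ->; rewrite eq_sym.
have d2 : forall i j, Z i i = Z j j.
  by move=> i j; have := e i j i j; rewrite delta_mulE mul_deltaE !eqxx mul1r mulr1 => ->.
by rewrite d1 (d2 p 0) mulr_natr.
Qed.

Lemma dsgn_entry (K : fieldType) r s (M : 'M[K]_(r + s)) i j :
  (dsgn K r s *m M *m dsgn K r s) i j =
  (if (i < r)%N then 1 else -1) * M i j * (if (j < r)%N then 1 else -1).
Proof. by rewrite /dsgn mul_mx_diag mxE mul_diag_mx !mxE. Qed.

Lemma two_cancelK (K : fieldType) (x : K) : (2%:R : K) != 0 -> - x = x -> x = 0.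
Proof.
move=> two h; have : (2%:R : K) * x = 0 by rewrite mulr2n mulrDl mul1r -{1}h addNr.
by move/eqP; rewrite mulf_eq0 (negbTE two) /= => /eqP.
Qed.

Lemma Mrs_evenE (K : fieldType) r s (M : 'M[K]_(r + s)) : (2%:R : K) != 0 ->
  Mrs_even M <-> dsgn K r s *m M *m dsgn K r s = M.
Proof.
move=> two; split.
  move=> h; apply/matrixP => i j; rewrite dsgn_entry.
  case hi: (i < r)%N; case hj: (j < r)%N;
    rewrite ?mul1r ?mulr1 ?mulN1r ?mulrN1 ?opprK //;
    by rewrite h ?oppr0 // hi hj.
move=> h i j hij; move/matrixP: h => /(_ i j); rewrite dsgn_entry.
move: hij; case hi: (i < r)%N; case hj: (j < r)%N => //= _;
  rewrite ?mul1r ?mulr1 ?mulN1r ?mulrN1; exact: two_cancelK.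
Qed.

Lemma Mrs_oddE (K : fieldType) r s (M : 'M[K]_(r + s)) : (2%:R : K) != 0 ->
  Mrs_odd M <-> dsgn K r s *m M *m dsgn K r s = - M.
Proof.
move=> two; split.
  move=> h; apply/matrixP => i j; rewrite dsgn_entry mxE.
  case hi: (i < r)%N; case hj: (j < r)%N;
    rewrite ?mul1r ?mulr1 ?mulN1r ?mulrN1 ?opprK //;
    by rewrite h ?oppr0 // hi hj.
move=> h i j hij; move/matrixP: h => /(_ i j); rewrite dsgn_entry mxE.
move: hij; case hi: (i < r)%N; case hj: (j < r)%N => //= _;
  rewrite ?mul1r ?mulr1 ?mulN1r ?mulrN1 ?opprK => h.
  by apply: two_cancelK two _; rewrite -h.
by apply: two_cancelK two _; rewrite -h.
Qed.

Lemma dsgn_sq (K : fieldType) r s : dsgn K r s *m dsgn K r s = 1%:M.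
Proof.
apply/matrixP => i j; rewrite /dsgn mul_diag_mx !mxE.
case: (boolP (i < r)%N) => hi; rewrite ?mul1r ?mulN1r //.
by case: (i == j); rewrite /= ?opprK ?oppr0.
Qed.

Lemma dsgn_tr (K : fieldType) r s : (dsgn K r s)^T = dsgn K r s.
Proof. exact: tr_diag_mx. Qed.

Lemma tr_swap (K : fieldType) r s (X Y : 'M[K]_(r + s)) e :
  dsgn K r s *m X *m dsgn K r s = e *: X ->
  \tr (dsgn K r s *m (Y *m X)) = e * \tr (dsgn K r s *m (X *m Y)).
Proof.
set D := dsgn K r s => h.
rewrite [in LHS]mulmxA mxtrace_mulC [in LHS]mulmxA.
have -> : X *m D = D *m (D *m X *m D) by rewrite !mulmxA dsgn_sq mul1mx.
by rewrite h -scalemxAr -scalemxAl mxtraceZ mulmxA.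
Qed.

Lemma tr_delta (K : fieldType) n (A : 'M[K]_n) i j : \tr (A *m delta_mx j i) = A i j.
Proof.
rewrite /mxtrace (bigD1 i) //= big1 => [|k hk]; first by rewrite mul_deltaE eqxx mulr1 addr0.
by rewrite mul_deltaE (negbTE hk) mulr0.
Qed.

Lemma iso_even_sym (K : fieldType) (V : vectType K) (mul : V -> V -> V) (V0 V1 : {vspace V})
  r s : (2%:R : K) != 0 -> iso_Mrs mul V0 V1 r s -> has_even_symmetric mul V0 V1.
Proof.
move=> two [f [fL [finv fK finvK] fM fE fO]].
set D := dsgn K r s.
pose B x y := \tr (D *m (f x *m f y)).
have fD : forall x y, f (x + y) = f x + f y := lfD fL.
have fZ : forall a x, f (a *: x) = a *: f x := lfZ fL.
have ev : forall x, x \in V0 -> D *m f x *m D = 1 *: f x.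
  by move=> x /fE /(Mrs_evenE _ two); rewrite scale1r.
have od : forall x, x \in V1 -> D *m f x *m D = -1 *: f x.
  by move=> x /fO /(Mrs_oddE _ two); rewrite scaleN1r.
have orth : forall x y, x \in V0 -> y \in V1 -> B x y = 0.
  move=> x y hx hy; apply: (two_cancelK two); rewrite /B.
  have e1 := tr_swap (f x) (od _ hy); have e2 := tr_swap (f y) (ev _ hx).
  rewrite mulN1r in e1; rewrite mul1r in e2.
  by rewrite {2}e1 e2.
have orth' : forall x y, x \in V0 -> y \in V1 -> B y x = 0.
  by move=> x y hx hy; rewrite /B (tr_swap _ (ev _ hx)) mul1r; exact: orth.
exists B; split.
- by move=> a x y z; rewrite /B fL mulmxDl -scalemxAl mulmxDr -scalemxAr mxtraceD mxtraceZ.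
- by move=> a x y z; rewrite /B fL mulmxDr -scalemxAr mulmxDr -scalemxAr mxtraceD mxtraceZ.
- split.
    move=> x y hx hy; split; first exact: orth.
    exact: orth'.
  move=> [] [] x y /= hx hy.
  + by rewrite expr1 mulN1r /B (tr_swap _ (od _ hx)) mulN1r opprK.
  + by rewrite expr0 mul1r (orth' _ _ hy hx) (orth _ _ hy hx).
  + by rewrite expr0 mul1r (orth' _ _ hx hy) (orth _ _ hx hy).
  + by rewrite expr0 mul1r /B (tr_swap _ (ev _ hx)) mul1r.
- by move=> x y z; rewrite /B !fM !mulmxA.
move=> x h.
have fx0 : f x = 0.
  apply/matrixP => i j; rewrite mxE.
  have := h (finv (delta_mx j i)); rewrite /B finvK mulmxA tr_delta /D /dsgn mul_diag_mx mxE.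
  move/eqP; rewrite mulf_eq0 => /orP [|/eqP //].
  by rewrite mxE; case: (i < r)%N; rewrite ?oppr_eq0 oner_eq0.
by rewrite -(fK x) fx0 -(fK 0) (lf0 fL).
Qed.

Module SA.

Section Grading.
Variables (K : closedFieldType) (V : vectType K) (mul : V -> V -> V) (V0 V1 : {vspace V}).
Hypothesis mulL : forall a x y z, mul (a *: x + y) z = a *: mul x z + mul y z.
Hypothesis mulR : forall a x y z, mul z (a *: x + y) = a *: mul z x + mul z y.
Hypothesis HV : (V0 + V1)%VS = fullv.
Hypothesis HD : directv (V0 + V1).
Hypothesis Hgr : forall (i j : bool) x y, x \in sdeg V0 V1 i -> y \in sdeg V0 V1 j ->
          mul x y \in sdeg V0 V1 (i (+) j).
Hypothesis two_nz : (2%:R : K) != 0.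

Hypothesis Hass : associative mul.
Lemma mul0l z : mul 0 z = 0. Proof. exact: (lf0 (f := fun x => mul x z)). Qed.
Lemma mulDl x y z : mul (x + y) z = mul x z + mul y z.
Proof. exact: (lfD (f := fun x => mul x z)). Qed.
Lemma mulZl a x z : mul (a *: x) z = a *: mul x z.
Proof. exact: (lfZ (f := fun x => mul x z)). Qed.
Lemma mulNl x z : mul (- x) z = - mul x z.
Proof. exact: (lfN (f := fun x => mul x z)). Qed.
Lemma mulBl x y z : mul (x - y) z = mul x z - mul y z.
Proof. exact: (lfB (f := fun x => mul x z)). Qed.
Lemma mul0r z : mul z 0 = 0. Proof. exact: (lf0 (f := fun x => mul z x)). Qed.
Lemma mulDr x y z : mul z (x + y) = mul z x + mul z y.
Proof. exact: (lfD (f := fun x => mul z x)). Qed.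
Lemma mulZr a x z : mul z (a *: x) = a *: mul z x.
Proof. exact: (lfZ (f := fun x => mul z x)). Qed.
Lemma mulNr x z : mul z (- x) = - mul z x.
Proof. exact: (lfN (f := fun x => mul z x)). Qed.
Lemma mulBr x y z : mul z (x - y) = mul z x - mul z y.
Proof. exact: (lfB (f := fun x => mul z x)). Qed.

Lemma cap01 : (V0 :&: V1 = 0)%VS. Proof. exact/directv_addP. Qed.
Lemma cap10 : (V1 :&: V0 = 0)%VS. Proof. by rewrite capvC cap01. Qed.

Definition p0 := daddv_pi V0 V1.
Definition p1 := daddv_pi V1 V0.
Definition sg x := p0 x - p1 x.

Lemma p0_in x : p0 x \in V0. Proof. exact: memv_pi. Qed.
Lemma p1_in x : p1 x \in V1. Proof. exact: memv_pi. Qed.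
Lemma p01 x : p0 x + p1 x = x.
Proof. by apply: daddv_pi_add; rewrite ?cap01 // HV memvf. Qed.
Lemma p0_even v : v \in V0 -> p0 v = v.
Proof. by move=> Hv; apply: daddv_pi_id => //; apply: cap01. Qed.
Lemma p1_odd v : v \in V1 -> p1 v = v.
Proof. by move=> Hv; apply: daddv_pi_id => //; apply: cap10. Qed.
Lemma p1_even v : v \in V0 -> p1 v = 0.
Proof. by move=> Hv; have := p01 v; rewrite p0_even // => h; apply: (addrI v); rewrite addr0. Qed.
Lemma p0_odd v : v \in V1 -> p0 v = 0.
Proof. by move=> Hv; have := p01 v; rewrite p1_odd // => h; apply: (addIr v); rewrite add0r. Qed.

Lemma sgL a x y : sg (a *: x + y) = a *: sg x + sg y.
Proof. by rewrite /sg !linearP /= scalerN scalerBr addrACA. Qed.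
Lemma sg_even v : v \in V0 -> sg v = v.
Proof. by move=> Hv; rewrite /sg p0_even // p1_even // subr0. Qed.
Lemma sg_odd v : v \in V1 -> sg v = - v.
Proof. by move=> Hv; rewrite /sg p0_odd // p1_odd // sub0r. Qed.
Lemma sgD x y : sg (x + y) = sg x + sg y. Proof. exact: lfD sgL _ _. Qed.
Lemma sgN x : sg (- x) = - sg x. Proof. exact: lfN sgL _. Qed.
Lemma sgB x y : sg (x - y) = sg x - sg y. Proof. exact: lfB sgL _ _. Qed.
Lemma sgZ a x : sg (a *: x) = a *: sg x. Proof. exact: lfZ sgL _ _. Qed.
Lemma sg0 : sg 0 = 0. Proof. exact: lf0 sgL. Qed.
Lemma sgE x : sg x = p0 x - p1 x. Proof. by []. Qed.

Lemma sgK x : sg (sg x) = x.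
Proof. by rewrite {2}/sg sgB sg_even ?p0_in // sg_odd ?p1_in // opprK p01. Qed.

Lemma mul00 x y : x \in V0 -> y \in V0 -> mul x y \in V0.
Proof. by move=> hx hy; have := @Hgr false false _ _ hx hy. Qed.
Lemma mul01 x y : x \in V0 -> y \in V1 -> mul x y \in V1.
Proof. by move=> hx hy; have := @Hgr false true _ _ hx hy. Qed.
Lemma mul10 x y : x \in V1 -> y \in V0 -> mul x y \in V1.
Proof. by move=> hx hy; have := @Hgr true false _ _ hx hy. Qed.
Lemma mul11 x y : x \in V1 -> y \in V1 -> mul x y \in V0.
Proof. by move=> hx hy; have := @Hgr true true _ _ hx hy. Qed.

Lemma sgM x y : sg (mul x y) = mul (sg x) (sg y).
Proof.
rewrite -{1}(p01 x) -{1}(p01 y) !mulDl !mulDr !sgD.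
rewrite sg_even ?mul00 ?p0_in // sg_odd ?mul01 ?p0_in ?p1_in //.
rewrite sg_odd ?mul10 ?p0_in ?p1_in // sg_even ?mul11 ?p1_in //.
by rewrite !mulNl !mulNr opprK.
Qed.


Lemma twoV : (2%:R : K)^-1 * 2%:R = 1. Proof. by rewrite mulVf. Qed.

Lemma two_cancel (v : V) : v + v = 0 -> v = 0.
Proof.
move=> h; have : (2%:R : K) *: v = 0 by rewrite scaler_nat mulr2n.
by move/eqP; rewrite scaler_eq0 (negbTE two_nz) /= => /eqP.
Qed.

Lemma even_sg x : x \in V0 <-> sg x = x.
Proof.
split; first exact: sg_even.
move=> h; have h1 : p1 x = 0.
  apply: two_cancel.
  have e : p1 x + p1 x = (p0 x + p1 x) - (p0 x - p1 x).
    by rewrite opprB [RHS]addrC -[RHS]addrA addKr.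
  by rewrite e p01 -/(sg x) h subrr.
by rewrite -(p01 x) h1 addr0 p0_in.
Qed.

Lemma odd_sg x : x \in V1 <-> sg x = - x.
Proof.
split; first exact: sg_odd.
move=> h; have h1 : p0 x = 0.
  apply: two_cancel.
  have e : p0 x + p0 x = (p0 x + p1 x) + (p0 x - p1 x).
    by rewrite addrACA subrr addr0.
  by rewrite e p01 -/(sg x) h subrr.
by rewrite -(p01 x) h1 add0r p1_in.
Qed.

Lemma vs_eq0 (U : {vspace V}) : (forall x, x \in U -> x = 0) -> U = 0%VS.
Proof. by move=> h; apply/vspaceP => x; rewrite memv0; apply/idP/eqP => [/h|->] //; rewrite mem0v. Qed.
Lemma vs_eqf (U : {vspace V}) : (forall x, x \in U) -> U = fullv.
Proof. by move=> h; apply/vspaceP => x; rewrite memvf h. Qed.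

Lemma p0_half x : p0 x = (2%:R)^-1 *: (x + sg x).
Proof.
rewrite /sg -{2}(p01 x) addrACA subrr addr0 -mulr2n -scaler_nat scalerA mulVf //.
by rewrite scale1r.
Qed.
Lemma p1_half x : p1 x = (2%:R)^-1 *: (x - sg x).
Proof.
rewrite /sg -{2}(p01 x) opprB [p1 x - _]addrC addrACA subrr add0r -mulr2n -scaler_nat scalerA mulVf //.
by rewrite scale1r.
Qed.

Definition ideal (I : {vspace V}) :=
  forall a x, x \in I -> mul a x \in I /\ mul x a \in I.

Hypothesis Hsimp : forall I, graded_ideal mul V0 V1 I -> I = 0%VS \/ I = fullv.
Hypothesis Hnz : exists x y, mul x y != 0.

Lemma sg_ideal I : ideal I -> (forall x, x \in I -> sg x \in I) -> I = 0%VS \/ I = fullv.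
Proof.
move=> hI hs; apply: Hsimp; split => //.
apply: subv_anti; apply/andP; split.
  apply/subvP => x xI; rewrite -(p01 x); apply: memv_add; rewrite memv_cap.
    by rewrite p0_in andbT p0_half memvZ // memvD // hs.
  by rewrite p1_in andbT p1_half memvZ // memvB // hs.
by rewrite subv_add !capvSl.
Qed.

Lemma pred_vs (P : V -> Prop) : P 0 -> (forall a x y, P x -> P y -> P (a *: x + y)) ->
  exists S : {vspace V}, forall x, x \in S <-> P x.
Proof. exact: vspace_of_pred. Qed.

Lemma Rann_ex : exists R : {vspace V}, (forall x, x \in R <-> forall a, mul a x = 0) /\ R = 0%VS.
Proof.
have [R HR] : exists R : {vspace V}, forall x, x \in R <-> (forall a, mul a x = 0).
  apply: pred_vs; first by move=> a; rewrite mul0r.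
  by move=> k x y hx hy a; rewrite mulR hx hy scaler0 addr0.
exists R; split => //.
have : R = 0%VS \/ R = fullv.
  apply: sg_ideal.
    move=> a x /HR hx; split; apply/HR => b.
      by rewrite Hass hx.
    by rewrite Hass hx mul0l.
  move=> x /HR hx; apply/HR => b.
  by rewrite -(sgK b) -sgM hx sg0.
case => // hR; exfalso; case: Hnz => x [y]; apply/negP; rewrite negbK.
by have /HR -> : y \in R by rewrite hR memvf.
Qed.

Lemma Rann0 x : (forall a, mul a x = 0) -> x = 0.
Proof.
move=> h; have [R [HR R0]] := Rann_ex.
have : x \in R by apply/HR.
by rewrite R0 memv0 => /eqP.
Qed.

Section Form.
Variable B : V -> V -> K.
Hypothesis HB1 : forall a x y z, B (a *: x + y) z = a * B x z + B y z.
Hypothesis HB2 : forall a x y z, B z (a *: x + y) = a * B z x + B z y.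
Hypothesis HBev : forall x y, x \in V0 -> y \in V1 -> B x y = 0 /\ B y x = 0.
Hypothesis HBsym : forall (i j : bool) x y, x \in sdeg V0 V1 i -> y \in sdeg V0 V1 j ->
          B x y = (-1) ^+ (i && j) * B y x.
Hypothesis HBass : forall x y z, B (mul x y) z = B x (mul y z).
Hypothesis HBnd : forall x, (forall y, B x y = 0) -> x = 0.

Lemma BDl x y z : B (x + y) z = B x z + B y z.
Proof. exact: (lfD (f := fun x => (B x z : K^o))). Qed.
Lemma BDr x y z : B z (x + y) = B z x + B z y.
Proof. exact: (lfD (f := fun x => (B z x : K^o))). Qed.
Lemma BNl x z : B (- x) z = - B x z.
Proof. exact: (lfN (f := fun x => (B x z : K^o))). Qed.
Lemma BNr x z : B z (- x) = - B z x.
Proof. exact: (lfN (f := fun x => (B z x : K^o))). Qed.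
Lemma B0l z : B 0 z = 0. Proof. exact: (lf0 (f := fun x => (B x z : K^o))). Qed.
Lemma B0r z : B z 0 = 0. Proof. exact: (lf0 (f := fun x => (B z x : K^o))). Qed.

Lemma Bsg u v : B u v = B v (sg u).
Proof.
rewrite -[in LHS](p01 u) -[in LHS](p01 v) -[in RHS](p01 v) /sg !BDl !BDr !BNr.
have [h1 h2] := HBev (p0_in u) (p1_in v).
have [h3 h4] := HBev (p0_in v) (p1_in u).
rewrite h1 h2 h3 h4 !addr0 !add0r oppr0 addr0.
rewrite (@HBsym false false _ _ (p0_in u) (p0_in v)) expr0 mul1r.
rewrite (@HBsym true true _ _ (p1_in u) (p1_in v)) expr1 mulN1r.
by [].
Qed.

Lemma ideal_simple J : ideal J -> J = 0%VS \/ J = fullv.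
Proof.
move=> hJ.
have memJZ : forall a x y, x \in J -> y \in J -> a *: x + y \in J.
  by move=> a x y hx hy; rewrite memvD ?memvZ.
have [I1 HI1] : exists S : {vspace V}, forall x, x \in S <-> (x \in J /\ sg x \in J).
  apply: pred_vs; first by rewrite sg0 mem0v.
  by move=> a x y [? ?] [? ?]; rewrite sgL; split; apply: memJZ.
have I1c : I1 = 0%VS \/ I1 = fullv.
  apply: sg_ideal.
    move=> a x /HI1 [hx hsx]; have [j1 j2] := hJ a _ hx; have [j3 j4] := hJ (sg a) _ hsx.
    by split; apply/HI1; rewrite sgM.
  by move=> x /HI1 [hx hsx]; apply/HI1; rewrite sgK.
case: I1c => [I10|I1f]; last first.
  by right; apply: vs_eqf => x; have /HI1 [] : x \in I1 by rewrite I1f memvf.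
have I1z : forall x, x \in J -> sg x \in J -> x = 0.
  move=> x hx hsx; have : x \in I1 by apply/HI1.
  by rewrite I10 memv0 => /eqP.
have [I2 HI2] : exists S : {vspace V}, forall x, x \in S <->
     (exists y z, [/\ y \in J, sg z \in J & x = y + z]).
  apply: pred_vs; first by exists 0, 0; rewrite sg0 mem0v addr0.
  move=> a x y [y1 [z1 [h1 h2 ->]]] [y2 [z2 [h3 h4 ->]]].
  exists (a *: y1 + y2), (a *: z1 + z2); split; rewrite ?sgL ?memJZ //.
  by rewrite scalerDr addrACA.
have I2c : I2 = 0%VS \/ I2 = fullv.
  apply: sg_ideal.
    move=> a x /HI2 [y [z [hy hz ->]]]; have [j1 j2] := hJ a _ hy.
    have [j3 j4] := hJ (sg a) _ hz.
    split; apply/HI2.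
      by exists (mul a y), (mul a z); rewrite sgM; split => //; rewrite mulDr.
    by exists (mul y a), (mul z a); rewrite sgM; split => //; rewrite mulDl.
  move=> x /HI2 [y [z [hy hz ->]]]; apply/HI2.
  by exists (sg z), (sg y); rewrite sgK sgD addrC.
case: I2c => [I20|I2f].
  left; apply: vs_eq0 => x hx.
  have : x \in I2 by apply/HI2; exists x, 0; rewrite sg0 mem0v addr0.
  by rewrite I20 memv0 => /eqP.
have [Y HY] : exists S : {vspace V}, forall x, x \in S <->
     (x \in J /\ forall w, sg w \in J -> B x w = 0).
  apply: pred_vs; first by split; [rewrite mem0v | move=> w _; rewrite B0l].
  move=> a x y [hx hx'] [hy hy']; split; first exact: memJZ.
  by move=> w hw; rewrite HB1 hx' // hy' // mulr0 addr0.
have prodY : forall a x, x \in J -> mul a x \in Y.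
  move=> a x hx; apply/HY; split; first exact: (proj1 (hJ a _ hx)).
  move=> w hw; rewrite HBass (I1z (mul x w)) ?B0r //.
    exact: (proj2 (hJ w _ hx)).
  by rewrite sgM; exact: (proj1 (hJ (sg x) _ hw)).
have [Y2 HY2] : exists S : {vspace V}, forall x, x \in S <->
     (exists y z, [/\ y \in Y, sg z \in Y & x = y + z]).
  apply: pred_vs; first by exists 0, 0; rewrite sg0 mem0v addr0.
  move=> a x y [y1 [z1 [h1 h2 ->]]] [y2 [z2 [h3 h4 ->]]].
  exists (a *: y1 + y2), (a *: z1 + z2); split.
  - by rewrite memvD ?memvZ.
  - by rewrite sgL memvD ?memvZ.
  - by rewrite scalerDr addrACA.
have idY : ideal Y.
  move=> a x /HY [hx hx']; split; first exact: prodY.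
  apply/HY; split; first exact: (proj2 (hJ a _ hx)).
  move=> w hw; rewrite HBass hx' // sgM.
  exact: (proj1 (hJ (sg a) _ hw)).
have Y2c : Y2 = 0%VS \/ Y2 = fullv.
  apply: sg_ideal.
    move=> a x /HY2 [y [z [hy hz ->]]]; have [j1 j2] := idY a _ hy.
    have [j3 j4] := idY (sg a) _ hz.
    split; apply/HY2.
      by exists (mul a y), (mul a z); rewrite sgM; split => //; rewrite mulDr.
    by exists (mul y a), (mul z a); rewrite sgM; split => //; rewrite mulDl.
  move=> x /HY2 [y [z [hy hz ->]]]; apply/HY2.
  by exists (sg z), (sg y); rewrite sgK sgD addrC.
case: Y2c => [Y20|Y2f].
  left; apply: vs_eq0 => x hx; apply: Rann0 => a.
  have : mul a x \in Y2 by apply/HY2; exists (mul a x), 0; rewrite sg0 mem0v addr0 prodY.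
  by rewrite Y20 memv0 => /eqP.
have JY : forall x, x \in J -> x \in Y.
  move=> x hx; have : x \in Y2 by rewrite Y2f memvf.
  move/HY2 => [y [z [hy hz ex]]].
  have hyJ : y \in J by case/HY: hy.
  have hzJ : sg z \in J by case/HY: hz.
  have zJ : z \in J.
    have -> : z = x - y by rewrite ex addrAC subrr add0r.
    by rewrite memvB.
  by rewrite ex (I1z _ zJ hzJ) addr0.
left; apply: vs_eq0 => x hx; apply: HBnd => v.
have : v \in I2 by rewrite I2f memvf.
move/HI2 => [y [z [hy hz ->]]]; rewrite BDr.
have [_ hx'] := (HY x).1 (JY x hx).
have [_ hy'] := (HY y).1 (JY y hy).
rewrite (hx' z) // addr0 Bsg hy' //.
by rewrite sgK.
Qed.

Definition lideal (I : {vspace V}) := forall a x, x \in I -> mul a x \in I.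

Lemma minimal_lideal : exists L : {vspace V},
  [/\ lideal L, L != 0%VS & forall L', lideal L' -> (L' <= L)%VS -> L' = 0%VS \/ L' = L].
Proof.
suff H : forall k (I : {vspace V}), lideal I -> I != 0%VS -> (\dim I <= k)%N ->
  exists L : {vspace V},
  [/\ lideal L, L != 0%VS & forall L', lideal L' -> (L' <= L)%VS -> L' = 0%VS \/ L' = L].
  apply: (H _ fullv (fun a x _ => memvf _) _ (leqnn _)).
  apply/negP => /eqP f0; case: Hnz => x [y]; apply/negP; rewrite negbK.
  have : mul x y \in (fullv : {vspace V}) by rewrite memvf.
  by rewrite f0 memv0.
elim=> [|k IH] I hI Inz hk.
  by move: hk; rewrite leqn0 dimv_eq0 (negbTE Inz).
case: (classic (forall L', lideal L' -> (L' <= I)%VS -> L' = 0%VS \/ L' = I)) => [hm|hm].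
  by exists I.
have [L' hL'] := not_all_ex_not _ _ hm.
have [l1 hL2] := imply_to_and _ _ hL'.
have [l2 hL3] := imply_to_and _ _ hL2.
have [l3 l4] := not_or_and _ _ hL3.
apply: (IH L' l1); first by apply/eqP.
have : (\dim L' < \dim I)%N.
  rewrite ltn_neqAle dimvS // andbT.
  apply/negP => /eqP hd; apply: l4; apply/eqP.
  by rewrite eqEdim l2 hd leqnn.
by move=> h; rewrite -ltnS; apply: leq_trans h hk.
Qed.

Section Ideal.
Variable L : {vspace V}.
Hypothesis Lid : lideal L.
Hypothesis Lnz : L != 0%VS.
Hypothesis Lmin : forall L', lideal L' -> (L' <= L)%VS -> L' = 0%VS \/ L' = L.

Lemma trans_L x y : x \in L -> x != 0 -> y \in L -> exists a, mul a x = y.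
Proof.
move=> xL xnz yL.
have [Ax HAx] : exists S : {vspace V}, forall y, y \in S <-> exists a, mul a x = y.
  apply: pred_vs; first by exists 0; rewrite mul0l.
  by move=> c y1 y2 [a1 <-] [a2 <-]; exists (c *: a1 + a2); rewrite mulL.
have hAx : lideal Ax.
  by move=> b y1 /HAx [a <-]; apply/HAx; exists (mul b a); rewrite Hass.
have sAx : (Ax <= L)%VS.
  by apply/subvP => y1 /HAx [a <-]; apply: Lid.
case: (Lmin hAx sAx) => hA.
  exfalso; move/negP: xnz; apply; apply/eqP; apply: Rann0 => a.
  have : mul a x \in Ax by apply/HAx; exists a.
  by rewrite hA memv0 => /eqP.
by apply/HAx; rewrite hA.
Qed.

Lemma pickL : exists2 x, x \in L & x != 0.
Proof. by exists (vpick L); rewrite ?memv_pick // vpick0. Qed.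

Lemma faithful a : (forall x, x \in L -> mul a x = 0) -> a = 0.
Proof.
have [Ann HAnn] : exists S : {vspace V}, forall a, a \in S <-> forall x, x \in L -> mul a x = 0.
  apply: pred_vs; first by move=> x _; rewrite mul0l.
  by move=> c a1 a2 h1 h2 x xL; rewrite mulL h1 // h2 // scaler0 addr0.
have iAnn : ideal Ann.
  move=> b a' /HAnn ha; split; apply/HAnn => x xL.
    by rewrite -Hass ha // mul0r.
  by rewrite -Hass ha // Lid.
case: (ideal_simple iAnn) => hA.
  move=> h; have : a \in Ann by apply/HAnn.
  by rewrite hA memv0 => /eqP.
exfalso; have [x xL xnz] := pickL.
move/negP: xnz; apply; apply/eqP; apply: Rann0 => b.
by have /HAnn -> : b \in Ann by rewrite hA memvf.
Qed.

Local Notation m := (\dim L).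
Local Notation bL := (vbasis L).

Definition crd (x : V) : 'rV[K]_m := \row_i coord bL i x.
Definition vec (u : 'rV[K]_m) : V := \sum_i u 0 i *: bL`_i.
Definition mat (h : V -> V) : 'M[K]_m := \matrix_(j, i) coord bL i (h bL`_j).
Definition gm (a : V) : 'M[K]_m := mat (mul a).

Lemma crdL c x y : crd (c *: x + y) = c *: crd x + crd y.
Proof. by apply/rowP => i; rewrite !mxE linearP. Qed.

Lemma vec_in u : vec u \in L.
Proof.
apply: memv_suml => i _; apply: memvZ; apply: vbasis_mem.
by apply: mem_nth; rewrite size_tuple.
Qed.

Lemma crd_vec u : crd (vec u) = u.
Proof.
apply/rowP => i; rewrite mxE linear_sum (bigD1 i) //= big1 => [|j hj].
  by rewrite linearZ /= coord_free ?(basis_free (vbasisP L)) // eqxx mulr1 addr0.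
by rewrite linearZ /= coord_free ?(basis_free (vbasisP L)) // (negbTE hj) mulr0.
Qed.

Lemma vec_crd x : x \in L -> vec (crd x) = x.
Proof.
by move=> xL; rewrite [RHS](coord_vbasis xL); apply: eq_bigr => i _; rewrite mxE.
Qed.

Lemma vec0 : vec 0 = 0.
Proof. by rewrite /vec big1 // => i _; rewrite mxE scale0r. Qed.

Lemma crd0 : crd 0 = 0.
Proof. exact: lf0 crdL. Qed.

Lemma crd_mat (h : V -> V) : (forall c x y, h (c *: x + y) = c *: h x + h y) ->
  forall x, x \in L -> crd (h x) = crd x *m mat h.
Proof.
move=> hL x xL; rewrite -{1}(vec_crd xL) /vec (lf_sum hL).
apply/rowP => i; rewrite !mxE linear_sum; apply: eq_bigr => j _.
by rewrite (lfZ hL) linearZ /= !mxE.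
Qed.

Lemma crd_g a x : x \in L -> crd (mul a x) = crd x *m gm a.
Proof. by apply: crd_mat => c y z; rewrite mulR. Qed.

Lemma gmL c a a' : gm (c *: a + a') = c *: gm a + gm a'.
Proof. by apply/matrixP => j i; rewrite !mxE mulL linearP. Qed.

Lemma u_g a u : u *m gm a = crd (mul a (vec u)).
Proof. by rewrite crd_g ?vec_in // crd_vec. Qed.

Lemma gm_mul a b : gm (mul a b) = gm b *m gm a.
Proof.
apply: rows_eq => u; rewrite mulmxA !u_g -Hass crd_g ?Lid ?vec_in //.
by rewrite u_g.
Qed.

Lemma transg (u : 'rV_m) : u != 0 -> forall v, exists a, u *m gm a = v.
Proof.
move=> unz v.
have vnz : vec u != 0.
  by apply/negP => /eqP h; move/negP: unz; apply; rewrite -(crd_vec u) h crd0.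
have [a ha] := trans_L (vec_in u) vnz (vec_in v).
by exists a; rewrite u_g ha crd_vec.
Qed.

Lemma gm_onto X : exists a, gm a = X.
Proof.
apply: burnside; first exact: gmL.
  by move=> x y; exists (mul y x); rewrite gm_mul.
exact: transg.
Qed.

Lemma gm_inj a b : gm a = gm b -> a = b.
Proof.
move=> h; apply/eqP; rewrite -subr_eq0; apply/eqP; apply: faithful => x xL.
have hx : mul (a - b) x \in L by apply: Lid.
by rewrite -(vec_crd hx) crd_g // (lfB gmL) h subrr mulmx0 vec0.
Qed.

Lemma gm_sg_ex : exists P : 'M[K]_m,
  [/\ P *m P = 1%:M, (0 < \rank (kermx (P - 1%:M)))%N &
      forall a, gm (sg a) = P *m gm a *m P].
Proof.
have [x0 x0L x0nz] := pickL.
have [z0 [z0L hz0]] : exists z0, z0 \in L /\ mul (sg x0) z0 != 0.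
  apply: NNPP => hn; move/negP: x0nz; apply; apply/eqP.
  rewrite -(sgK x0) (faithful (a := sg x0)) ?sg0 // => z zL.
  by apply/eqP; apply: NNPP => hz; apply: hn; exists z; split => //; apply/negP.
pose psi x := mul (sg x) z0.
have psiL : forall c x y, psi (c *: x + y) = c *: psi x + psi y.
  by move=> c x y; rewrite /psi sgL mulL.
have psi_mul : forall a x, psi (mul a x) = mul (sg a) (psi x).
  by move=> a x; rewrite /psi sgM Hass.
have psi_in : forall x, psi x \in L by move=> x; apply: Lid.
pose Psi := mat psi.
have crd_psi : forall x, x \in L -> crd (psi x) = crd x *m Psi := crd_mat psiL.
have rel : forall a, gm a *m Psi = Psi *m gm (sg a).
  move=> a; apply: rows_eq => u.
  rewrite mulmxA u_g -crd_psi ?Lid ?vec_in // psi_mul crd_g // crd_psi ?vec_in //.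
  by rewrite crd_vec mulmxA.
have Psi_inj : forall u : 'rV[K]_m, u *m Psi = 0 -> u = 0.
  move=> u hu; case: (eqVneq u 0) => // unz; exfalso.
  have all0 : forall v : 'rV[K]_m, v *m Psi = 0.
    move=> v; have [a <-] := transg unz v.
    by rewrite -mulmxA rel mulmxA hu mul0mx.
  move/negP: hz0; apply; apply/eqP.
  by rewrite -/(psi x0) -(vec_crd (psi_in x0)) crd_psi // all0 vec0.
have m0 : (0 < m)%N by rewrite lt0n dimv_eq0.
have [c hc] : exists c, Psi *m Psi = c%:M.
  apply: cent_scalar => X; have [a <-] := gm_onto X.
  by rewrite mulmxA rel -mulmxA rel -{2}(sgK a) mulmxA.
have cnz : c != 0.
  apply/negP => /eqP c0; pose u : 'rV[K]_m := delta_mx 0 (Ordinal m0).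
  have unz : u != 0.
    apply/negP => /eqP/matrixP/(_ 0 (Ordinal m0)); rewrite !mxE !eqxx /=.
    by move/eqP; rewrite oner_eq0.
  have h2 : u *m Psi *m Psi = 0 by rewrite -mulmxA hc c0 mul_mx_scalar scale0r.
  by move: unz; rewrite (Psi_inj _ (Psi_inj _ h2)) eqxx.
have [d hd] : exists d, root ('X^2 - c%:P) d.
  by apply/closed_rootP; rewrite size_XnsubC.
have dd : d * d = c.
  by move: hd; rewrite /root !hornerE subr_eq0 expr2 => /eqP.
have dnz : d != 0 by apply/negP => /eqP d0; move: cnz; rewrite -dd d0 GRing.mul0r eqxx.
pose P := d^-1 *: Psi.
have e0 : d^-1 * d^-1 * (d * d) = 1 by rewrite mulrACA mulVf // mulr1.
have e1 : d^-1 * (d^-1 * (d * d)) = 1 by rewrite mulrA e0.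
have PP : P *m P = 1%:M.
  rewrite /P -scalemxAr -scalemxAl scalerA hc -dd -scalemx1 scalerA e0.
  by rewrite scale1r.
have Prel : forall a, gm (sg a) = P *m gm a *m P.
  move=> a; rewrite /P -scalemxAr -!scalemxAl -mulmxA rel mulmxA hc mul_scalar_mx.
  by rewrite !scalerA -dd e0 scale1r.
case: (posnP (\rank (kermx (P - 1%:M)))) => hk; last by exists P.
exists (- P); split.
- by rewrite mulNmx mulmxN opprK.
- have : kermx (P - 1%:M) == 0 by rewrite -mxrank_eq0 hk.
  rewrite kermx_eq0 => hfree.
  have : (P + 1%:M) *m (P - 1%:M) == 0.
    by rewrite mulmxBr mulmxDl PP mulmx1 mul1mx [1%:M + P]addrC subrr.
  rewrite mulmx_free_eq0 // addr_eq0 => /eqP ->.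
  by rewrite opprK subrr mxrank_ker mxrank0 subn0.
by move=> a; rewrite Prel mulmxN !mulNmx opprK.
Qed.

Lemma iso_ex : exists r s, (1 <= r)%N /\ iso_Mrs mul V0 V1 r s.
Proof.
have [P [PP Pk Psg]] := gm_sg_ex.
have [r [s [Q [Q' [r1 QQ' Q'Q QP]]]]] := involution_diag two_nz PP Pk.
set D := dsgn K r s.
exists r, s; split => //.
pose f x := (Q *m gm x *m Q')^T.
have PQ' : P *m Q' = Q' *m D.
  have : Q' *m (Q *m P) *m Q' = Q' *m (D *m Q) *m Q' by rewrite QP.
  rewrite mulmxA Q'Q mul1mx => ->.
  by rewrite mulmxA -(mulmxA _ Q) QQ' mulmx1.
have fsg : forall x, f (sg x) = D *m f x *m D.
  move=> x; rewrite /f Psg -!mulmxA PQ' !mulmxA QP.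
  by rewrite !trmx_mul dsgn_tr !mulmxA.
have gback : forall x, Q' *m (f x)^T *m Q = gm x.
  by move=> x; rewrite trmxK !mulmxA Q'Q mul1mx -mulmxA Q'Q mulmx1.
have f_inj : forall x y, f x = f y -> x = y.
  by move=> x y h; apply: gm_inj; rewrite -gback h gback.
have fL : forall a x y, f (a *: x + y) = a *: f x + f y.
  move=> a x y; rewrite /f gmL mulmxDr mulmxDl -scalemxAr -scalemxAl.
  by rewrite linearD linearZ.
have fN : forall x, f (- x) = - f x := lfN fL.
have ex_g : forall X, exists a, gm a == X.
  by move=> X; have [a ha] := gm_onto X; exists a; rewrite ha.
exists f; split => //.
- exists (fun M => xchoose (ex_g (Q' *m M^T *m Q))).
    move=> x; apply: gm_inj; rewrite (eqP (xchooseP (ex_g _))).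
    by rewrite gback.
  move=> M; rewrite /f (eqP (xchooseP (ex_g _))).
  by rewrite !mulmxA QQ' mul1mx -!mulmxA QQ' mulmx1 trmxK.
- move=> x y; rewrite /f gm_mul -trmx_mul; congr (_^T).
  by rewrite !mulmxA -(mulmxA (Q *m gm y) Q' Q) Q'Q mulmx1.
- move=> x; rewrite even_sg (Mrs_evenE _ two_nz) -fsg; split => [->//|].
  exact: f_inj.
move=> x; rewrite odd_sg (Mrs_oddE _ two_nz) -fsg -fN; split => [->//|].
exact: f_inj.
Qed.
End Ideal. End Form. End Grading.

End SA.

Lemma iso_field_even (K : fieldType) (V : vectType K) (mul : V -> V -> V) (V0 V1 : {vspace V}) :
  iso_field mul V0 V1 -> has_even_symmetric mul V0 V1.
Proof.
move=> [f [fL [finv fK finvK] fM fE fO]].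
have f0 : f 0 = 0 := (lf0 (f := (f : V -> K^o)) fL).
exists (fun x y => f x * f y); split.
- by move=> a x y z; rewrite fL mulrDl mulrA.
- by move=> a x y z; rewrite fL mulrDr mulrCA.
- split.
    by move=> x y hx /fO hy; rewrite hy mulr0 mul0r.
  move=> [] [] x y /= hx hy.
  + by move/fO: hx => ->; move/fO: hy => ->; rewrite !mulr0.
  + by rewrite expr0 mul1r mulrC.
  + by rewrite expr0 mul1r mulrC.
  + by rewrite expr0 mul1r mulrC.
- by move=> x y z; rewrite !fM mulrA.
move=> x h; have := h (finv 1); rewrite finvK mulr1 => hx.
by rewrite -(fK x) hx -f0 fK.
Qed.

Lemma supercomm_iso (K : fieldType) (V : vectType K) (mul : V -> V -> V) (V0 V1 : {vspace V})
  r s : (1 <= r)%N -> iso_Mrs mul V0 V1 r s -> supercommutative mul V0 V1 ->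
  iso_field mul V0 V1.
Proof.
move=> r1 [f [fL [finv fK finvK] fM fE fO]] hsc.
have fZ : forall c x, f (c *: x) = c *: f x := lfZ fL.
have d01 : forall (i j : 'I_(r + s)) (e : K), i != j ->
     (delta_mx i j : 'M[K]_(r+s)) *m delta_mx j i = e *: (delta_mx j i *m delta_mx i j) ->
     False.
  move=> i j e nij; rewrite !mul_delta_mx => /matrixP /(_ i i); rewrite !mxE !eqxx /=.
  by rewrite (negbTE nij) /= mulr0 => /eqP; rewrite oner_eq0.
have hr : r = 1%N.
  apply/eqP; rewrite eqn_leq r1 andbT leqNgt; apply/negP => r2.
  have h0 : (0 < r + s)%N by apply: leq_trans r1 (leq_addr _ _).
  have h1 : (1 < r + s)%N by apply: leq_trans r2 (leq_addr _ _).
  pose i0 := Ordinal h0; pose i1 := Ordinal h1.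
  have ev : forall i j : 'I_(r+s), (i < r)%N -> (j < r)%N -> Mrs_even (delta_mx i j : 'M[K]_(r+s)).
    move=> i j hi hj p q hpq; rewrite mxE.
    by case: eqP => [ep|//]; case: eqP => [eq|] //=; move: hpq; rewrite ep eq hi hj.
  have ex : finv (delta_mx i0 i1) \in V0 by apply/fE; rewrite finvK; exact: ev.
  have ey : finv (delta_mx i1 i0) \in V0 by apply/fE; rewrite finvK; exact: ev.
  have := @hsc false false _ _ ex ey; rewrite /= expr0 => /(congr1 f).
  rewrite fZ !fM !finvK => e.
  by apply: (@d01 i0 i1 1 _ e).
have hs : s = 0%N.
  apply/eqP; rewrite -leqn0 leqNgt; apply/negP => s1.
  have h0 : (0 < r + s)%N by apply: leq_trans r1 (leq_addr _ _).
  have h1 : (r < r + s)%N by rewrite -{1}(addn0 r) ltn_add2l.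
  pose i0 := Ordinal h0; pose j0 := Ordinal h1.
  have od : forall i j : 'I_(r+s), (i < r)%N -> ~~ (j < r)%N -> Mrs_odd (delta_mx i j : 'M[K]_(r+s)).
    move=> i j hi hj p q hpq; rewrite mxE.
    by case: eqP => [ep|//]; case: eqP => [eq|] //=; move: hpq; rewrite ep eq hi (negbTE hj).
  have od' : forall i j : 'I_(r+s), (i < r)%N -> ~~ (j < r)%N -> Mrs_odd (delta_mx j i : 'M[K]_(r+s)).
    move=> i j hi hj p q hpq; rewrite mxE.
    by case: eqP => [ep|//]; case: eqP => [eq|] //=; move: hpq; rewrite ep eq hi (negbTE hj).
  have nj : ~~ (j0 < r)%N by rewrite /= ltnn.
  have ex : finv (delta_mx i0 j0) \in V1 by apply/fO; rewrite finvK; exact: od.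
  have ey : finv (delta_mx j0 i0) \in V1 by apply/fO; rewrite finvK; exact: od'.
  have := @hsc true true _ _ ex ey; rewrite /= expr1 => /(congr1 f).
  rewrite fZ !fM !finvK => e.
  apply: (@d01 i0 j0 (-1) _ e).
  by rewrite -val_eqE /= neq_ltn r1.
subst r s.
pose o : 'I_(1 + 0) := ord0.
have sc : forall M : 'M[K]_(1 + 0), M = (M o o)%:M.
  by move=> M; apply/matrixP => i j; rewrite !mxE !ord1 eqxx.
exists (fun x => f x o o); split.
- by move=> a x y; rewrite fL !mxE.
- exists (fun k => finv (k%:M)).
    by move=> x; rewrite -sc fK.
  by move=> k; rewrite finvK mxE eqxx.
- by move=> x y; rewrite fM mxE big_ord1.
- by move=> x; apply/fE => i j; rewrite !ord1 eqxx.
move=> x; rewrite fO; split.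
  by move/(_ o o); apply.
by move=> h i j _; rewrite !ord1.
Qed.

Theorem mainTheorem4 (K : closedFieldType) (charK0 : [pchar K] =i pred0)
  (V : vectType K) (mul : V -> V -> V) (V0 V1 : {vspace V}) :
  is_superalgebra mul V0 V1 -> associative mul -> simple_superalgebra mul V0 V1 ->
  (has_even_symmetric mul V0 V1 <->
     exists r s : nat, (1 <= r)%N /\ iso_Mrs mul V0 V1 r s)
  /\ (supercommutative mul V0 V1 ->
      (has_even_symmetric mul V0 V1 <-> iso_field mul V0 V1)).
Proof.
move=> [mulL mulR [HV HD] Hgr] Hass [Hnz Hsimp].
have two : (2%:R : K) != 0 by move/pcharf0P: charK0 => ->.
have part1 : has_even_symmetric mul V0 V1 <-> exists r s, (1 <= r)%N /\ iso_Mrs mul V0 V1 r s.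
  split.
  - move=> [B [HB1 HB2 [HBev HBsym] HBass HBnd]].
    have [L [Lid Lnz Lmin]] := SA.minimal_lideal Hnz.
    exact: (SA.iso_ex mulL mulR HV HD Hgr two Hass Hsimp Hnz HB1 HB2 HBev HBsym HBass HBnd Lid Lnz Lmin).
  - by move=> [r [s [_ hiso]]]; exact: iso_even_sym two hiso.
split => // hsc; split.
- by move/part1 => [r [s [r1 hiso]]]; exact: supercomm_iso r1 hiso hsc.
- exact: iso_field_even.
Qed.
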